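(* Let $m,n$ be positive integers and let $s:\mathbb{R}\to\mathbb{R}$ be a spline of degree $m$ whose knots are exactly $\alpha_0<\alpha_1<\dots<\alpha_n$. Suppose that $\alpha_0$ and $\alpha_n$ are $s$-separated zeros of $s$ of order $\geq m$, i.e. $s$ is non-constant on $[\alpha_0,\alpha_n]$ and $s^{(j)}(\alpha_0)=s^{(j)}(\alpha_n)=0$ for all $j=0,1,\dots,m-1$. Then (i) $n\geq m+1$, and (ii) $s$ has at most $n-m-1$ separated zeros in the open interval $]\alpha_0,\alpha_n[$.
   Context: A spline of degree $m$ (with finitely many knots) is a function $s\in C^{m-1}(\mathbb{R},\mathbb{R})$ for which there are finitely many points such that on each interval between consecutive such points, and on the two unbounded complementary intervals, $s$ coincides with a polynomial of degree at most $m$. The knots of $s$ are the points at which $s$ is not $C^\infty$ (in any neighbourhood); the intervals between consecutive knots are the polynomiality domains. For a function $f$ and reals $a<b$, the points $a,b$ are $f$-separated if $f$ is non-constant on $[a,b]$; a strictly increasing finite family of points is $f$-separated if every two consecutive points are $f$-separated. ''$s$ has at most $k$ separated zeros in a set $I$'' means that every $s$-separated family of zeros of $s$ contained in $I$ has at most $k$ elements. The order of a zero $z$ of $f\in C^{m-1}$ is $\min(\{j\in\{0,\dots,m-1\}: f^{(j)}(z)\neq 0\}\cup\{m\})$. *)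

(* Defs.v *)
From HB Require Import structures.
From mathcomp Require Import all_boot all_order all_algebra.
From mathcomp Require Import all_classical all_reals all_analysis.
Set Implicit Arguments. Unset Strict Implicit. Unset Printing Implicit Defensive.
Import Order.TTheory GRing.Theory Num.Theory.
Import numFieldNormedType.Exports.
Local Open Scope ring_scope.
Local Open Scope classical_set_scope.

Section Splines.
Variable R : realType.

Definition is_Ck (k : nat) (f : R -> R) : Prop :=
  (forall j, (j < k)%N -> forall x : R, derivable (derive1n j f) x 1) /\
  continuous (derive1n k f).

Definition poly_on (m : nat) (f : R -> R) (A : set R) : Prop :=
  exists p : {poly R}, (size p <= m.+1)%N /\ forall x, A x -> f x = p.[x].

(* the i-th piece (0 <= i <= size xs) determined by the strictly increasing points xs:
   ]-oo, xs_0[, ]xs_0, xs_1[, ..., ]xs_(k-1), +oo[ *)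
Definition piece (xs : seq R) (i : nat) : set R :=
  [set x | (i == 0%N) || (nth 0 xs i.-1 < x)] `&`
  [set x | (i == size xs) || (x < nth 0 xs i)].

(* spline of degree m (with finitely many knots), m >= 1 assumed separately *)
Definition is_spline (m : nat) (s : R -> R) : Prop :=
  is_Ck m.-1 s /\
  exists xs : seq R, sorted <%R xs /\
    forall i, (i <= size xs)%N -> poly_on m s (piece xs i).

Definition smooth_on (s : R -> R) (U : set R) : Prop :=
  forall k, forall y, U y -> derivable (derive1n k s) y 1.

Definition is_knot (s : R -> R) (x : R) : Prop :=
  ~ exists e : R, 0 < e /\ smooth_on s (ball x e).

Definition f_separated (f : R -> R) (a b : R) : Prop :=
  a < b /\ exists x y, x \in `[a, b] /\ y \in `[a, b] /\ f x != f y.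

Definition sep_zero_family (s : R -> R) (I : set R) (z : seq R) : Prop :=
  (forall i, (i < size z)%N -> I (nth 0 z i) /\ s (nth 0 z i) = 0) /\
  (forall i, (i.+1 < size z)%N -> f_separated s (nth 0 z i) (nth 0 z i.+1)).

Definition at_most_sep_zeros (s : R -> R) (k : nat) (I : set R) : Prop :=
  forall z : seq R, sep_zero_family s I z -> (size z <= k)%N.

End Splines.

(* Main.v *)
Require Import Defs.
From HB Require Import structures.
From mathcomp Require Import all_boot all_order all_algebra.
From mathcomp Require Import all_classical all_reals all_analysis.
From mathcomp Require Import lra zify.
Import Order.TTheory GRing.Theory Num.Theory.
Import numFieldNormedType.Exports.
Local Open Scope ring_scope.
Local Open Scope classical_set_scope.

Set Implicit Arguments. Unset Strict Implicit.
Section S.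
Variable R : realType.
Implicit Types (f g : R -> R) (a b x y : R).

Lemma loc1 f g a b : {in `]a,b[%R, f =1 g} -> {in `]a,b[%R, derive1 f =1 derive1 g}.
Proof.
move=> fg x xab; rewrite !derive1E; apply: near_eq_derive.
have := near_in_itvoo xab; apply: filterS => z; exact: fg.
Qed.


Lemma locn f g a b k : {in `]a,b[%R, f =1 g} -> {in `]a,b[%R, derive1n k f =1 derive1n k g}.
Proof.
move=> fg; elim: k => [|k IH] x xab; first exact: fg.
rewrite !derive1nS; exact: (@loc1 (derive1n k f) (derive1n k g) a b IH x xab).
Qed.

Lemma derive1n_horner (p : {poly R}) k : derive1n k (horner p) = horner (derivn k p).
Proof.
elim: k => [|k IH]; first by rewrite derive1n0 derivn0.
by rewrite derive1nS IH derivnS derivE.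
Qed.

Lemma cont_of_der f x : derivable f x 1 -> {for x, continuous f}.
Proof. by move=> d; apply/differentiable_continuous; rewrite -derivable1_diffP. Qed.

Lemma CL f a b : a <= b -> {within `[a,b], continuous f} ->
  (forall x, x \in `]a,b[%R -> derivable f x 1 /\ derive1 f x = 0) -> f b = f a.
Proof.
move=> + cf H; rewrite le_eqVlt => /orP [/eqP -> //|altb].
have hd : forall z, z \in `]a, b[%R -> is_derive z 1 f (derive1 f z).
  by move=> z /H [dz _]; rewrite derive1E; exact: derivableP.
have [c cab E] := MVT altb hd cf.
by apply/eqP; rewrite -subr_eq0 E (H c cab).2 mul0r.
Qed.


Lemma limR g y b : {for y, continuous g} -> y < b -> (forall z, y < z < b -> g z = 0) -> g y = 0.
Proof.
move=> cg yb H; apply/eqP; apply: contraT => gy0.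
have e0 : 0 < `|g y| by rewrite normr_gt0.
have h : \forall t \near y^'+, `|g y - g t| < `|g y|.
  by apply: cvgr_dist_lt => //; exact: cvg_at_right_filter.
have [t [[h1 h2] h3]] := filter_ex (filterI (filterI (nbhs_right_gt y) (nbhs_right_lt yb)) h).
by move: h3; rewrite (H t) ?h1 ?h2 // subr0 ltxx.
Qed.

Lemma limL g y a : {for y, continuous g} -> a < y -> (forall z, a < z < y -> g z = 0) -> g y = 0.
Proof.
move=> cg yb H; apply/eqP; apply: contraT => gy0.
have e0 : 0 < `|g y| by rewrite normr_gt0.
have h : \forall t \near y^'-, `|g y - g t| < `|g y|.
  by apply: cvgr_dist_lt => //; exact: cvg_at_left_filter.
have [t [[h1 h2] h3]] := filter_ex (filterI (filterI (nbhs_left_gt yb) (nbhs_left_lt y)) h).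
by move: h3; rewrite (H t) ?h1 ?h2 // subr0 ltxx.
Qed.


Lemma CLo g p q : (forall y, y \in `]p, q[%R -> derivable g y 1 /\ derive1 g y = 0) ->
  {in `]p, q[%R &, forall x z, g x = g z}.
Proof.
move=> H.
suff K : forall x z, x \in `]p, q[%R -> z \in `]p, q[%R -> x <= z -> g x = g z.
  move=> x z xi zi; case: (leP x z) => xz; first exact: K.
  by apply/esym/K => //; exact: ltW.
move=> x z xi zi xz; apply/esym/CL => //.
  apply: derivable_within_continuous => t ti; apply: (H t _).1.
  move: xi zi ti; rewrite !in_itv /= => /andP[? ?] /andP[? ?] /andP[? ?].
  apply/andP; split; lra.
move=> t ti; apply: H.
move: xi zi ti; rewrite !in_itv /= => /andP[? ?] /andP[? ?] /andP[? ?].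
apply/andP; split; lra.
Qed.


Lemma inoo (p q y : R) : (y \in `]p, q[%R) = (p < y < q).
Proof. by rewrite in_itv. Qed.

Lemma P1 f p q u v : continuous f ->
  (forall y, p < y < q -> derivable f y 1 /\ derivable (derive1 f) y 1 /\ derive1 (derive1 f) y = 0) ->
  p <= u -> u < v -> v <= q -> f u = 0 -> f v = 0 -> forall x, u <= x <= v -> f x = 0.
Proof.
move=> cf H pu uv vq fu fv.
have hd : forall z, z \in `]u, v[%R -> is_derive z 1 f (derive1 f z).
  move=> z; rewrite inoo => /andP[? ?]; rewrite derive1E; apply: derivableP.
  by apply: (H z _).1; apply/andP; split; lra.
have cfw : {within `[u, v], continuous f} by apply: continuous_subspaceT.
have [c cuv E] := MVT uv hd cfw.
have dc : derive1 f c = 0.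
  move: E; rewrite fu fv subrr => /esym /eqP; rewrite mulf_eq0 => /orP[/eqP //|].
  by rewrite subr_eq0 => /eqP vu; move: uv; rewrite vu ltxx.
move: cuv; rewrite inoo => /andP[uc cv].
have d0 : forall z, p < z < q -> derive1 f z = 0.
  move=> z zi; rewrite -dc; apply: (@CLo (derive1 f) p q).
  - by move=> y; rewrite inoo => /H [_ [? ?]].
  - by rewrite inoo.
  - by rewrite inoo; apply/andP; split; lra.
move=> x /andP[ux xv]; rewrite -fu; apply: CL => //.
  by apply: continuous_subspaceT.
move=> t; rewrite inoo => /andP[? ?]; split.
  by apply: (H t _).1; apply/andP; split; lra.
by apply: d0; apply/andP; split; lra.
Qed.


Record Hyp (d n : nat) (f : R -> R) (a : nat -> R) : Prop := {
  h_n : (0 < n)%N;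
  h_inc : forall i j, (i < j)%N -> (j <= n)%N -> a i < a j;
  h_der : forall j, (j.+1 < d)%N -> forall x, derivable (derive1n j f) x 1;
  h_cont : forall j, (j < d)%N -> continuous (derive1n j f);
  h_piece : forall i, (i < n)%N -> forall y, a i < y < a i.+1 ->
      (forall k, derivable (derive1n k f) y 1) /\ derive1n d.+1 f y = 0;
  h_end : forall j, (j < d)%N -> derive1n j f (a 0%N) = 0 /\ derive1n j f (a n) = 0 }.

Lemma sep_not0 f u v : f_separated f u v -> (forall x, u <= x <= v -> f x = 0) -> False.
Proof.
move=> [_ [x [y [xi [yi]]]]].
move: xi yi; rewrite !inE /= !in_itv /= => xi yi.
by move=> /eqP fxy H; apply: fxy; rewrite !H.
Qed.

Lemma PC n f (a : nat -> R) i (u v : R) : Hyp 1 n f a -> (i < n)%N -> a i <= u -> u < v -> v <= a i.+1 ->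
  f u = 0 -> f v = 0 -> f_separated f u v -> False.
Proof.
move=> H il au uv va fu fv fs; apply: (@sep_not0 f u v fs).
apply: (@P1 f (a i) (a i.+1)) => //.
  by have := h_cont H (ltn0Sn 0).
move=> y yi; have [hd h2] := h_piece H il yi.
by split; [exact: (hd 0%N)|split; [exact: (hd 1%N)|exact: h2]].
Qed.


Lemma fam_lt f (I : set R) w : sep_zero_family f I w ->
  forall i j, (i < j)%N -> (j < size w)%N -> nth 0 w i < nth 0 w j.
Proof.
move=> [_ Hs] i j ij; elim: j ij => // j IH.
rewrite ltnS leq_eqVlt => /orP[/eqP <-|ij] jw; first exact: (Hs i jw).1.
exact: lt_trans (IH ij (ltnW jw)) (Hs j jw).1.
Qed.

Lemma inccE (p q y : R) : `[p, q] y = (p <= y <= q).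
Proof. by rewrite /= in_itv. Qed.
Lemma inooE (p q y : R) : `]p, q[ y = (p < y < q).
Proof. by rewrite /= in_itv. Qed.

Lemma B1 n f (a : nat -> R) w : Hyp 1 n f a -> sep_zero_family f `[a 0%N, a n] w ->
  (2 <= size w)%N -> (size w <= n)%N.
Proof.
move=> H fam h2; have [Hz Hs] := fam.
have win : forall i, (i < size w)%N -> a 0%N <= nth 0 w i <= a n.
  by move=> i iw; have [+ _] := Hz i iw; rewrite inccE.
have w0 : forall i, (i < size w)%N -> f (nth 0 w i) = 0 by move=> i iw; exact: (Hz i iw).2.
have claim : forall j, (0 < j)%N -> (j < size w)%N -> (j <= n)%N /\ a j < nth 0 w j.
  elim => [//|j IH] _ jw.
  case: j IH jw => [_ jw|j IH jw].
    split; first exact: (h_n H).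
    rewrite ltNge; apply/negP => wa.
    have := win 0%N (ltnW jw); move=> /andP[a0w _].
    exact: (PC H (h_n H) a0w (fam_lt fam (ltn0Sn 0) jw) wa (w0 _ (ltnW jw)) (w0 _ jw) (Hs 0%N jw)).
  have [jn ajw] := IH isT (ltnW jw).
  have /andP[_ wn] := win _ (ltnW jw).
  have jn' : (j.+1 < n)%N.
    move: jn; rewrite leq_eqVlt => /orP[/eqP jn|//].
    by move: (lt_le_trans ajw wn); rewrite jn ltxx.
  split; first exact: jn'.
  rewrite ltNge; apply/negP => wa.
  exact: (PC H jn' (ltW ajw) (fam_lt fam (ltnSn j.+1) jw) wa (w0 _ (ltnW jw)) (w0 _ jw) (Hs j.+1 jw)).
have sz : (0 < (size w).-1)%N by case: (size w) h2 => [|[|k]].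
have szl : ((size w).-1 < size w)%N by case: (size w) h2.
have [jn ajw] := claim _ sz szl.
have /andP[_ wn] := win _ szl.
have jn' : ((size w).-1 < n)%N.
  move: jn; rewrite leq_eqVlt => /orP[/eqP jn|//].
  by move: (lt_le_trans ajw wn); rewrite jn ltxx.
by move: jn'; case: (size w) h2.
Qed.


Lemma oo_cc (u v t : R) : t \in `]u, v[%R -> t \in `[u, v]%R.
Proof. by rewrite !in_itv /= => /andP[? ?]; apply/andP; split; exact: ltW. Qed.

Lemma EX f u v : continuous f -> (forall x, u < x < v -> derivable f x 1) ->
  f u = 0 -> f v = 0 -> f_separated f u v ->
  exists t, [/\ u < t < v, f t != 0 & derive1 f t = 0].
Proof.
move=> cf df fu fv fs; have uv := fs.1.
have cfw : {within `[u,v], continuous f} by apply: continuous_subspaceT.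
have [M Mi HM] := EVT_max (ltW uv) cfw.
have [m mi Hm] := EVT_min (ltW uv) cfw.
have dfo : forall t, t \in `]u,v[%R -> derivable f t 1 by move=> t; rewrite inoo; exact: df.
case: (ltP 0 (f M)) => [fM|fM].
  have Mo : M \in `]u,v[%R.
    move: Mi; rewrite !in_itv /= => /andP[uM Mv].
    apply/andP; split; rewrite lt_neqAle ?uM ?Mv andbT.
      by apply/eqP => eM; move: fM; rewrite -eM fu ltxx.
    by apply/eqP => eM; move: fM; rewrite eM fv ltxx.
  have := derive1_at_max (ltW uv) dfo Mo (fun t ti => HM t (oo_cc ti)).
  move=> D; exists M; split; first by rewrite -inoo.
    by rewrite gt_eqF.
  by rewrite derive1E; exact: derive_val.
case: (ltP (f m) 0) => [fm|fm].
  have mo : m \in `]u,v[%R.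
    move: mi; rewrite !in_itv /= => /andP[um mv].
    apply/andP; split; rewrite lt_neqAle ?um ?mv andbT.
      by apply/eqP => em; move: fm; rewrite -em fu ltxx.
    by apply/eqP => em; move: fm; rewrite em fv ltxx.
  have := derive1_at_min (ltW uv) dfo mo (fun t ti => Hm t (oo_cc ti)).
  move=> D; exists m; split; first by rewrite -inoo.
    by rewrite lt_eqF.
  by rewrite derive1E; exact: derive_val.
exfalso; apply: (@sep_not0 f u v fs) => x xi.
have xi' : x \in `[u, v]%R by rewrite in_itv.
apply/eqP; rewrite eq_le; apply/andP; split.
  exact: le_trans (HM x xi') fM.
exact: le_trans fm (Hm x xi').
Qed.



Lemma SEPd f u v x y : continuous f -> (forall t, derivable f t 1) -> u < v ->
  derive1 f u = 0 -> u <= x <= v -> u <= y <= v -> f x = 0 -> f y != 0 ->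
  f_separated (derive1 f) u v.
Proof.
move=> cf df uv du xi yi fx fy; split => //.
case: (pselect (exists x0 y0, x0 \in `[u, v] /\ y0 \in `[u, v] /\ derive1 f x0 != derive1 f y0)) => // Hn.
exfalso.
have d0 : forall t, u <= t <= v -> derive1 f t = 0.
  move=> t ti; case: (eqVneq (derive1 f t) 0) => // dt; exfalso; apply: Hn; exists t, u.
  rewrite !in_setE /= !in_itv /= ti lexx (ltW uv) du; split => //; split => //.
have cst : forall t, u <= t <= v -> f t = f u.
  move=> t /andP[ut tv]; apply: CL => //; first by apply: continuous_subspaceT.
  move=> z; rewrite inoo => /andP[? ?]; split => //; apply: d0; apply/andP; split; lra.
by move: fy; rewrite (cst y yi) -(cst x xi) fx eqxx.
Qed.


Lemma Hyp_der d n f (a : nat -> R) : Hyp d.+2 n f a -> Hyp d.+1 n (derive1 f) a.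
Proof.
move=> H; split.
- exact: h_n H.
- exact: h_inc H.
- by move=> j jd x; rewrite -derive1Sn; apply: (h_der H).
- by move=> j jd; rewrite -derive1Sn; apply: (h_cont H).
- move=> i il y yi; have [h1 h2] := h_piece H il yi; split.
    by move=> k; rewrite -derive1Sn.
  by rewrite -derive1Sn.
- by move=> j jd; rewrite -!derive1Sn; apply: (h_end H).
Qed.


Definition Claim d := forall n f (a : nat -> R) w, Hyp d n f a ->
  sep_zero_family f `[a 0%N, a n] w -> (2 <= size w)%N -> (size w + d <= n.+1)%N.

Lemma claim1 : Claim 1.
Proof. by move=> n f a w H fam h2; rewrite addn1 ltnS; exact: (B1 H fam h2). Qed.

Lemma step d : Claim d.+1 -> Claim d.+2.
Proof.
move=> IH n f a w H fam h2; have [Hz Hs] := fam.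
have win : forall i, (i < size w)%N -> a 0%N <= nth 0 w i <= a n.
  by move=> i iw; have [+ _] := Hz i iw; rewrite inccE.
have w0 : forall i, (i < size w)%N -> f (nth 0 w i) = 0 by move=> i iw; exact: (Hz i iw).2.
have cf : continuous f by have := h_cont H (isT : (0 < d.+2)%N).
have df : forall t, derivable f t 1 := @h_der _ _ _ _ H 0%N isT.
have e0 := h_end H (isT : (0 < d.+2)%N).
have e1 := h_end H (isT : (1 < d.+2)%N).
have a0n : a 0%N < a n := h_inc H (h_n H) (leqnn n).
set r := (size w).-1.
have rw : size w = r.+1 by rewrite /r; case: (size w) h2.
have r1 : (1 <= r)%N by rewrite /r; case: (size w) h2 => [|[|k]].
have ex : forall i, exists t, (i < r)%N ->
    [/\ nth 0 w i < t < nth 0 w i.+1, f t != 0 & derive1 f t = 0].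
  move=> i; case: (ltnP i r) => ir; last by exists 0.
  have iw : (i.+1 < size w)%N by rewrite rw ltnS.
  have [t Ht] := EX cf (fun x _ => df x) (w0 i (ltnW iw)) (w0 i.+1 iw) (Hs i iw).
  by exists t.
have [xi Hxi] := choice ex.
pose g := fun i => if i == 0%N then a 0%N else if i == r.+1 then a n else xi i.-1.
have xib : forall i, (i < r)%N -> [/\ nth 0 w i < xi i < nth 0 w i.+1, a 0%N < xi i < a n,
     f (xi i) != 0 & derive1 f (xi i) = 0].
  move=> i ir; have [/andP[l1 l2] l3 l4] := Hxi i ir; split => //; first by rewrite l1 l2.
  have /andP[b1 _] := win i (leq_trans ir (leq_pred _)).
  have /andP[_ b2] : a 0%N <= nth 0 w i.+1 <= a n by apply: win; rewrite rw ltnS.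
  by apply/andP; split; [exact: le_lt_trans b1 l1|exact: lt_le_trans l2 b2].
have famv : sep_zero_family (derive1 f) `[a 0%N, a n] (mkseq g r.+2).
  split.
    rewrite size_mkseq => i il; rewrite !nth_mkseq // /g.
    case: eqP => [_|i0]; first by rewrite inccE lexx (ltW a0n); split => //; exact: (e1).1.
    case: eqP => [_|ir]; first by rewrite inccE lexx (ltW a0n); split => //; exact: (e1).2.
    have ir' : (i.-1 < r)%N.
      by move: il i0 ir; case: i => [//|i] /=; rewrite !ltnS leq_eqVlt => /orP[/eqP ->|].
    have [_ /andP[? ?] _ ->] := xib _ ir'.
    by rewrite inccE; split => //; apply/andP; split; exact: ltW.
  move=> i; rewrite size_mkseq => il; rewrite !nth_mkseq ?(ltnW il) // /g.
  have ir : (i <= r)%N by rewrite -ltnS.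
  case: (posnP i) => [->|ip].
    rewrite /= (_ : (1 == r.+1) = false); last by case: r r1 {rw ex Hxi g xib ir il}.
    have [/andP[_ _] /andP[x1 _] fx dx] := xib 0%N r1.
    have x0 : a 0%N < xi 0%N by [].
    apply: (SEPd (x := a 0%N) (y := xi 0%N)) => //; first exact: (e1).1.
    - by rewrite lexx ltW.
    - by rewrite lexx ltW.
    - exact: (e0).1.
  rewrite (gtn_eqF (ltn0Sn i)) /=.
  have ip1 : (i.-1 < r)%N by case: i ip ir {il} => //.
  have [/andP[_ w1] /andP[_ xn] fx dx] := xib _ ip1.
  case: (eqVneq i r) => [eir|nir].
    rewrite -eir eqxx (ltn_eqF (ltnSn i)).
    apply: (SEPd (x := a n) (y := xi i.-1)) => //.
    - by rewrite lexx ltW.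
    - by rewrite lexx ltW.
    - exact: (e0).2.
  have ir2 : (i < r)%N by rewrite ltn_neqAle nir ir.
  rewrite (ltn_eqF (ir : (i < r.+1)%N)) eqSS (negbTE nir).
  have [/andP[w2 _] _ _ _] := xib _ ir2.
  have ii : i.-1.+1 = i by rewrite prednK.
  rewrite ii in w1.
  apply: (SEPd (x := nth 0 w i) (y := xi i.-1)) => //.
  - exact: lt_trans w1 w2.
  - by rewrite (ltW w1) (ltW w2).
  - by rewrite lexx (ltW (lt_trans w1 w2)).
  - apply: w0; rewrite rw; exact: (leq_trans ir2).
have h : (size (mkseq g r.+2) + d.+1 <= n.+1)%N.
  by apply: (IH n (derive1 f) a _ (Hyp_der H) famv); rewrite size_mkseq.
by move: h; rewrite size_mkseq rw !addSn !addnS.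
Qed.


Lemma claimAll d : Claim d.+1.
Proof. elim: d => [|d IH]; [exact: claim1|exact: step]. Qed.

Lemma derive1n_cst0 k : derive1n k (fun _ : R => (0 : R)) = (fun _ => 0).
Proof.
elim: k => [//|k IH]; rewrite derive1nS IH; apply/funext => t.
exact: (derive1_cst (0 : R^o) t).
Qed.

Lemma Lk k g p q c1 c2 :
  (forall y, p < y < q -> forall j, derivable (derive1n j g) y 1) ->
  (forall y, p < y < q -> derive1n k g y = 0) ->
  p <= c1 -> c1 < c2 -> c2 <= q ->
  (forall y, c1 < y < c2 -> g y = 0) -> forall y, p < y < q -> g y = 0.
Proof.
elim: k g => [|k IH] g hd hk pc c12 cq h0 y yi; first exact: (hk y yi).
have H1 : forall t, p < t < q -> forall j, derivable (derive1n j (derive1 g)) t 1.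
  by move=> t ti j; rewrite -derive1Sn; exact: hd.
have H2 : forall t, p < t < q -> derive1n k (derive1 g) t = 0.
  by move=> t ti; rewrite -derive1Sn; exact: hk.
have H3 : forall t, c1 < t < c2 -> derive1 g t = 0.
  move=> t ti; rewrite (@loc1 g (fun _ => 0) c1 c2) ?inoo //.
    exact: (derive1_cst (0 : R^o) t).
have h1 := IH (derive1 g) H1 H2 pc c12 cq H3.
have mid : c1 < (c1 + c2) / 2 < c2 by apply/andP; split; lra.
rewrite -(h0 _ mid); apply: (@CLo g p q); rewrite ?inoo //.
- move=> t; rewrite inoo => ti; split; [exact: (hd t ti 0%N)|exact: h1].
- move: mid => /andP[? ?]; apply/andP; split; lra.
Qed.


Lemma Dend g p q j : p < q -> (forall y, p < y < q -> g y = 0) ->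
  continuous (derive1n j g) -> derive1n j g p = 0 /\ derive1n j g q = 0.
Proof.
move=> pq h0 cg.
have z : forall y, p < y < q -> derive1n j g y = 0.
  move=> y yi; rewrite (@locn g (fun _ => 0) p q j) ?inoo //.
    by rewrite derive1n_cst0.
split; [exact: (limR (cg p) pq z)|exact: (limL (cg q) pq z)].
Qed.

Lemma ZC d n f (a : nat -> R) i c1 c2 : Hyp d.+1 n f a -> (i < n)%N ->
  a i <= c1 -> c1 < c2 -> c2 <= a i.+1 -> (forall y, c1 < y < c2 -> f y = 0) ->
  forall y, a i <= y <= a i.+1 -> f y = 0.
Proof.
move=> H il ac c12 ca h0.
have op : forall y, a i < y < a i.+1 -> f y = 0.
  apply: (@Lk d.+2 f (a i) (a i.+1) c1 c2) => //.
  - by move=> y yi; have [+ _] := h_piece H il yi.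
  - by move=> y yi; have [_ +] := h_piece H il yi.
have cf : continuous f by have := h_cont H (isT : (0 < d.+1)%N).
have ai : a i < a i.+1 := h_inc H (ltnSn i) il.
move=> y /andP[y1 y2].
case: (eqVneq y (a i)) => [->|n1]; first exact: (limR (cf (a i)) ai op).
case: (eqVneq y (a i.+1)) => [->|n2]; first exact: (limL (cf (a i.+1)) ai op).
apply: op; apply/andP; split; rewrite lt_neqAle ?y1 ?y2 andbT //; by rewrite eq_sym.
Qed.


Lemma notsep0 f p q : p < q -> ~ f_separated f p q -> f p = 0 -> forall x, p <= x <= q -> f x = 0.
Proof.
move=> pq ns fp x xi; case: (eqVneq (f x) 0) => // fx; exfalso; apply: ns.
split => //; exists x, p; rewrite !in_setE /= !in_itv /= xi lexx (ltW pq) fp.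
by split => //; split.
Qed.

Lemma sep_wit f p q : f_separated f p q -> exists t, p <= t <= q /\ f t != 0.
Proof.
move=> [_ [x [y [+ [+ fxy]]]]]; rewrite !in_setE /= !in_itv /= => xi yi.
case: (eqVneq (f x) 0) => fx; last by exists x.
by exists y; split => //; rewrite -fx eq_sym.
Qed.

Lemma sep_shrinkL f p c q : f_separated f p q -> c < q -> (forall x, p <= x <= c -> f x = 0) ->
  f c = 0 -> f_separated f c q.
Proof.
move=> fs cq h0 fc; have [t [/andP[pt tq] ft]] := sep_wit fs.
have ct : c < t.
  rewrite ltNge; apply/negP => tc; move: ft; rewrite h0 ?eqxx //.
  by rewrite pt tc.
split => //; exists t, c; rewrite !in_setE /= !in_itv /= (ltW ct) tq lexx (ltW cq) fc.
by split => //; split.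
Qed.

Lemma sep_shrinkR f p c q : f_separated f p q -> p < c -> (forall x, c <= x <= q -> f x = 0) ->
  f c = 0 -> f_separated f p c.
Proof.
move=> fs pc h0 fc; have [t [/andP[pt tq] ft]] := sep_wit fs.
have tc : t < c.
  rewrite ltNge; apply/negP => ct; move: ft; rewrite h0 ?eqxx //.
  by rewrite ct tq.
split => //; exists t, c; rewrite !in_setE /= !in_itv /= (ltW tc) pt lexx (ltW pc) fc.
by split => //; split.
Qed.

Lemma fam_sub f (I J : set R) z : sep_zero_family f I z ->
  (forall i, (i < size z)%N -> J (nth 0 z i)) -> sep_zero_family f J z.
Proof. by move=> [Hz Hs] HJ; split => // i il; split; [exact: HJ|exact: (Hz i il).2]. Qed.

Lemma fam_behead f (I : set R) z : sep_zero_family f I z -> sep_zero_family f I (behead z).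
Proof.
move=> [Hz Hs]; split => i; rewrite size_behead => il; rewrite !nth_behead.
  by apply: Hz; case: (size z) il.
by apply: Hs; case: (size z) il.
Qed.

Lemma fam_take f (I : set R) z k : sep_zero_family f I z -> sep_zero_family f I (take k z).
Proof.
move=> [Hz Hs]; split => i; rewrite size_take => il.
  have [ik iz] : (i < k)%N /\ (i < size z)%N by move: il; case: (ltnP k (size z)) => kz il; lia.
  by rewrite nth_take //; apply: Hz.
have [ik iz] : (i.+1 < k)%N /\ (i.+1 < size z)%N by move: il; case: (ltnP k (size z)) => kz il; lia.
by rewrite !nth_take //; [apply: Hs|lia].
Qed.


Lemma fam_ext f p q z : f p = 0 -> f q = 0 -> p < q -> sep_zero_family f `]p, q[ z ->
  (0 < size z)%N -> f_separated f p (nth 0 z 0) -> f_separated f (nth 0 z (size z).-1) q ->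
  sep_zero_family f `[p, q] (p :: rcons z q).
Proof.
move=> fp fq pq [Hz Hs] zn ls rs; split => i; rewrite /= size_rcons => il.
  case: i il => [_|i il] /=; first by rewrite in_itv /= lexx (ltW pq).
  rewrite nth_rcons; case: ltnP => iz.
    have [+ ->] := Hz i iz; rewrite /= !in_itv /= => /andP[? ?].
    by split => //; apply/andP; split; exact: ltW.
  have -> : i = size z by lia.
  by rewrite eqxx /= in_itv /= lexx (ltW pq).
case: i il => [_|i il] /=; first by rewrite nth_rcons zn.
rewrite !nth_rcons; case: (ltnP i.+1 (size z)) => iz.
  by rewrite (ltnW iz); exact: Hs.
have -> : i.+1 = size z by lia.
have ilt : (i < size z)%N by lia.
by rewrite leqnn eqxx; have -> : i = (size z).-1 by lia.
Qed.

Lemma Hyp_shift d n f (a : nat -> R) : Hyp d n.+2 f a ->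
  (forall j, (j < d)%N -> derive1n j f (a 1%N) = 0) -> Hyp d n.+1 f (fun i => a i.+1).
Proof.
move=> H e1; split => //.
- by move=> i j ij jn; apply: (h_inc H).
- exact: h_der H.
- exact: h_cont H.
- by move=> i il y yi; apply: (h_piece H) yi.
- by move=> j jd; split; [exact: e1|exact: (h_end H jd).2].
Qed.

Lemma Hyp_drop d n f (a : nat -> R) : Hyp d n.+2 f a ->
  (forall j, (j < d)%N -> derive1n j f (a n.+1) = 0) -> Hyp d n.+1 f a.
Proof.
move=> H e1; split => //.
- by move=> i j ij jn; apply: (h_inc H) => //; exact: leqW.
- exact: h_der H.
- exact: h_cont H.
- by move=> i il y yi; apply: (h_piece H) yi; exact: leqW.
- by move=> j jd; split; [exact: (h_end H jd).1|exact: e1].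
Qed.


Lemma Int d : forall n f (a : nat -> R) z, Hyp d.+1 n f a -> f_separated f (a 0%N) (a n) ->
  sep_zero_family f `]a 0%N, a n[ z -> (size z + d.+1 < n)%N.
Proof.
elim=> [|n IHn] f a z H fs fam; first by have := h_n H.
have [Hz Hs] := fam.
have cf : continuous f by have := h_cont H (isT : (0 < d.+1)%N).
have e0 := h_end H (isT : (0 < d.+1)%N).
have a0n : a 0%N < a n.+1 := h_inc H (ltn0Sn n) (leqnn _).
have zin : forall i, (i < size z)%N -> a 0%N < nth 0 z i < a n.+1.
  by move=> i il; have [+ _] := Hz i il; rewrite inooE.
have zz : forall i, (i < size z)%N -> f (nth 0 z i) = 0 by move=> i il; exact: (Hz i il).2.
case: (posnP (size z)) => [sz0|szp].
  have sep2 : sep_zero_family f `[a 0%N, a n.+1] [:: a 0%N; a n.+1].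
    split => [[|[|i]]|[|i]] //= il.
    - by rewrite in_itv /= lexx (ltW a0n); split => //; exact: e0.1.
    - by rewrite in_itv /= lexx (ltW a0n); split => //; exact: e0.2.
  have := claimAll H sep2 isT; rewrite sz0 /=; lia.
case: (pselect (f_separated f (a 0%N) (nth 0 z 0))) => [ls|nls]; last first.
  have /andP[z0l z0r] := zin 0%N szp.
  have zero0 := notsep0 z0l nls e0.1.
  have zeroA : forall y, a 0%N <= y <= a 1%N -> f y = 0.
    case: (leP (nth 0 z 0) (a 1%N)) => za.
      apply: (ZC H (ltn0Sn n) (lexx _) z0l za) => y /andP[? ?].
      by apply: zero0; apply/andP; split; apply: ltW.
    have a01 : a 0%N < a 1%N := h_inc H (ltn0Sn 0) (ltn0Sn n).
    apply: (ZC H (ltn0Sn n) (lexx _) a01 (lexx _)) => y /andP[? ?].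
    by apply: zero0; apply/andP; split; apply: ltW => //; apply: lt_trans za.
  destruct n as [|n].
    by exfalso; apply: (sep_not0 fs zeroA).
  have a01 : a 0%N < a 1%N := h_inc H (ltn0Sn 0) (isT : (1 <= n.+2)%N).
  have a1n : a 1%N < a n.+2 := h_inc H (isT : (1 < n.+2)%N) (leqnn _).
  have zeroA' : forall y, a 0%N < y < a 1%N -> f y = 0.
    by move=> y /andP[? ?]; apply: zeroA; apply/andP; split; apply: ltW.
  have e1 : forall j, (j < d.+1)%N -> derive1n j f (a 1%N) = 0.
    by move=> j jd; exact: (Dend a01 zeroA' (h_cont H jd)).2.
  have H' := Hyp_shift H e1.
  have fs' : f_separated f (a 1%N) (a n.+2).
    apply: (sep_shrinkL fs a1n zeroA); apply: zeroA; by rewrite (ltW a01) lexx.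
  pose z' := if nth 0 z 0 <= a 1%N then behead z else z.
  have fam' : sep_zero_family f `]a 1%N, a n.+2[ z'.
    rewrite /z'; case: ifP => za.
      apply: fam_sub (fam_behead fam) _ => i; rewrite size_behead => il.
      have il' : (i.+1 < size z)%N by case: (size z) il.
      rewrite nth_behead inooE; have /andP[_ ->] := zin _ il'; rewrite andbT.
      have z1 : a 1%N < nth 0 z 1.
        rewrite ltNge; apply/negP => z1a.
        have o1 : (1 < size z)%N by case: (size z) il' => [|[|]].
        apply: (sep_not0 (Hs 0%N o1)) => x /andP[x1 x2]; apply: zeroA.
        apply/andP; split; last exact: le_trans x2 z1a.
        exact: le_trans (ltW z0l) x1.
      case: i il il' => [//|i] il il'.
      exact: lt_trans z1 (fam_lt fam (isT : (1 < i.+2)%N) il').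
    apply: (fam_sub fam) => i il; rewrite inooE; have /andP[_ ->] := zin _ il; rewrite andbT.
    move/negbT: za; rewrite -ltNge => za.
    case: i il => [//|i] il.
    exact: lt_trans za (fam_lt fam (ltn0Sn i) il).
  have := IHn f (fun i : nat => a i.+1) z' H' fs' fam'.
  rewrite /z'; case: ifP => _; last by lia.
  by rewrite size_behead; case: (size z) szp => // k _; lia.
case: (pselect (f_separated f (nth 0 z (size z).-1) (a n.+1))) => [rs|nrs]; last first.
  set zl := nth 0 z (size z).-1.
  have zll : ((size z).-1 < size z)%N by case: (size z) szp.
  have /andP[zl0 zl1] := zin _ zll.
  have zeroL := notsep0 zl1 nrs (zz _ zll).
  have ann : a n < a n.+1 := h_inc H (ltnSn n) (leqnn _).
  have zeroB : forall y, a n <= y <= a n.+1 -> f y = 0.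
    case: (leP (a n) zl) => za.
      apply: (ZC H (ltnSn n) za zl1 (lexx _)) => y /andP[? ?].
      by apply: zeroL; apply/andP; split; apply: ltW.
    apply: (ZC H (ltnSn n) (lexx _) ann (lexx _)) => y /andP[? ?].
    by apply: zeroL; apply/andP; split; apply: ltW => //; apply: lt_trans za _.
  destruct n as [|n].
    by exfalso; apply: (sep_not0 fs zeroB).
  have a0n1 : a 0%N < a n.+1 := h_inc H (ltn0Sn n) (leqnSn n.+1).
  have zeroB' : forall y, a n.+1 < y < a n.+2 -> f y = 0.
    by move=> y /andP[? ?]; apply: zeroB; apply/andP; split; apply: ltW.
  have e1 : forall j, (j < d.+1)%N -> derive1n j f (a n.+1) = 0.
    by move=> j jd; exact: (Dend ann zeroB' (h_cont H jd)).1.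
  have H' := Hyp_drop H e1.
  have fs' : f_separated f (a 0%N) (a n.+1).
    apply: (sep_shrinkR fs a0n1 zeroB); apply: zeroB; by rewrite (ltW ann) lexx.
  pose z' := if a n.+1 <= zl then take (size z).-1 z else z.
  have fam' : sep_zero_family f `]a 0%N, a n.+1[ z'.
    rewrite /z'; case: ifP => za.
      apply: fam_sub (fam_take _ fam) _ => i; rewrite size_take.
      have -> : ((size z).-1 < size z)%N = true by [].
      move=> il.
      have il' : (i < size z)%N by lia.
      rewrite nth_take // inooE; have /andP[-> _] := zin _ il'; rewrite /=.
      have o1 : ((size z).-2.+1 < size z)%N by case: (size z) szp il => [|[|k]].
      have z2 : nth 0 z (size z).-2 < a n.+1.
        rewrite ltNge; apply/negP => z2a.
        apply: (sep_not0 (Hs _ o1)) => x /andP[x1 x2]; apply: zeroB.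
        apply/andP; split; first exact: le_trans z2a x1.
        by apply: le_trans x2 _; move: zl1; rewrite /zl (_ : (size z).-1 = (size z).-2.+1); [exact: ltW|case: (size z) o1 => [|[|]]].
      have : (i <= (size z).-2)%N by case: (size z) il => [|[|k]] //.
      rewrite leq_eqVlt => /orP[/eqP -> //|ilt].
      exact: lt_trans (fam_lt fam ilt (ltnW o1)) z2.
    apply: (fam_sub fam) => i il; rewrite inooE; have /andP[-> _] := zin _ il; rewrite /=.
    move/negbT: za; rewrite -ltNge => za.
    have : (i <= (size z).-1)%N by case: (size z) il.
    rewrite leq_eqVlt => /orP[/eqP -> //|ilt].
    exact: lt_trans (fam_lt fam ilt zll) za.
  have := IHn f a z' H' fs' fam'.
  rewrite /z'; case: ifP => _; last by lia.
  by rewrite size_take; case: (size z) szp => // k _ /=; rewrite ltnSn; lia.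
have famc := fam_ext e0.1 e0.2 a0n fam szp ls rs.
have := claimAll H famc; rewrite /= size_rcons => /(_ isT); lia.
Qed.


Lemma cover (xs : seq R) y : (exists2 i, (i <= size xs)%N & piece xs i y) \/
  (exists2 j, (j < size xs)%N & y = nth 0 xs j).
Proof.
elim: xs => [|x xs IH]; first by left; exists 0%N => //; rewrite /piece /=; split.
case: (ltgtP y x) => [yx|xy|->]; last by right; exists 0%N.
  by left; exists 0%N => //; rewrite /piece /=; split.
case: IH => [[i il hi]|[j jl ->]]; last by right; exists j.+1.
left; exists i.+1 => //; move: hi; rewrite /piece /= => -[h1 h2]; split => //.
by case: i {il} h1 h2 => [|i] //= h1 _; rewrite h1 orbT.
Qed.

Lemma pieceA m s (xs : seq R) i y : (i <= size xs)%N -> poly_on m s (piece xs i) ->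
  piece xs i y -> derive1n m.+1 s y = 0.
Proof.
move=> il [p [ps hp]] hy.
pose a := if i == 0%N then y - 1 else nth 0 xs i.-1.
pose b := if i == size xs then y + 1 else nth 0 xs i.
have sub : forall x, x \in `]a, b[%R -> piece xs i x.
  move=> x; rewrite inoo /a /b => /andP[ax xb]; split.
    by move: ax; case: eqP => //= _ ->; rewrite orbT.
  by move: xb; case: eqP => //= _ ->; rewrite orbT.
have yab : y \in `]a, b[%R.
  move: hy => [h1 h2]; rewrite inoo /a /b; apply/andP; split.
    by case: eqVneq h1 => [_ _|_ /= h1]; [lra|exact: h1].
  by case: eqVneq h2 => [_ _|_ /= h2]; [lra|exact: h2].
rewrite (@locn s (horner p) a b m.+1) //; last by move=> x /sub /hp.
by rewrite derive1n_horner derivn_poly0 ?horner0.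
Qed.

Lemma pieceZ m s (xs : seq R) y : sorted <%R xs ->
  (forall i, (i <= size xs)%N -> poly_on m s (piece xs i)) ->
  (exists e : R, 0 < e /\ smooth_on s (ball y e)) -> derive1n m.+1 s y = 0.
Proof.
move=> sx hp [e [e0 sm]].
case: (cover xs y) => [[i il hi]|[j jl yj]]; first exact: pieceA il (hp i il) hi.
pose b := if j.+1 == size xs then y + 1 else nth 0 xs j.+1.
have yb : y < b.
  rewrite /b; case: eqP => [_|jn]; first lra.
  have jl' : (j.+1 < size xs)%N by rewrite ltn_neqAle jl andbT; apply/eqP.
  by rewrite yj; apply: (sorted_ltn_nth lt_trans 0 sx) => //.
apply: (limR _ yb).
  by apply: cont_of_der; apply: sm; exact: ballxx.
move=> z /andP[yz zb]; apply: (pieceA (xs := xs) (i := j.+1)) => //; first exact: (hp _ jl).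
split; first by rewrite /= -yj yz.
rewrite /=; move: zb; rewrite /b; case: eqVneq => [_ _|_ zb] //=.
Qed.

End S.

Unset Implicit Arguments.
Set Strict Implicit.

Theorem mainTheorem2 (R : realType) (m n : nat) (s : R -> R) (alpha : nat -> R) :
  (0 < m)%N -> (0 < n)%N ->
  is_spline m s ->
  (forall i j, (i < j)%N -> (j <= n)%N -> alpha i < alpha j) ->
  (forall x, is_knot s x <-> exists2 i, (i <= n)%N & x = alpha i) ->
  f_separated s (alpha 0%N) (alpha n) ->
  (forall j, (j < m)%N -> derive1n j s (alpha 0%N) = 0 /\ derive1n j s (alpha n) = 0) ->
  (m.+1 <= n)%N /\ at_most_sep_zeros s (n - m - 1) `]alpha 0%N, alpha n[.
Proof.
move=> m0 n0 [[Ckd Ckc] [xs [sxs hp]]] inc knot fs ends.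
case: m m0 Ckd Ckc hp ends => [//|d] _ Ckd Ckc hp ends.
have H : Hyp d.+1 n s alpha.
  split => //.
  - move=> j jd; case: (ltnP j d) => jd'.
      by move=> x; apply: cont_of_der; exact: Ckd.
    have -> : j = d by apply/eqP; rewrite eqn_leq jd' andbT -ltnS.
    exact: Ckc.
  - move=> i il y /andP[y1 y2].
    have nk : ~ is_knot s y.
      move/knot => [j jn yj].
      case: (leqP j i) => ji.
        move: ji; rewrite leq_eqVlt => /orP[/eqP ji|ji].
          by move: y1; rewrite yj ji ltxx.
        by move: (lt_trans (inc _ _ ji (ltnW il)) y1); rewrite yj ltxx.
      move: ji; rewrite leq_eqVlt => /orP[/eqP ji|ji].
        by move: y2; rewrite yj -ji ltxx.
      by move: (lt_trans y2 (inc _ _ ji jn)); rewrite yj ltxx.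
    have [e [e0 sm]] : exists e : R, 0 < e /\ smooth_on s (ball y e).
      by case: (pselect (exists e : R, 0 < e /\ smooth_on s (ball y e))) => // h; exfalso; exact: nk.
    split; first by move=> k; apply: sm; exact: ballxx.
    by apply: (pieceZ sxs hp); exists e.
have fam0 : sep_zero_family s `]alpha 0%N, alpha n[ [::] by split.
split; first by have := Int H fs fam0.
move=> z fz; have := Int H fs fz; lia.
Qed.
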